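(* Let $h$ be a smooth function on a neighborhood of $(0,0)$ whose Taylor expansion at $(0,0)$ is $h(x,y)=a^2x^2+b^2y^2+\sum_{m+n\ge3}h_{m,n}x^my^n$, where $a,b>0$ are linearly independent over $\mathbb{Q}$. Then there is a unique formal power series $z(x,y)=\frac12(ax^2-by^2)+\sum_{m+n\ge3}z_{m,n}x^my^n$ satisfying $z_x^2+z_y^2=h$ as formal power series. *)

(* Defs.v *)
From mathcomp Require Import all_boot all_order all_algebra.
From mathcomp Require Import reals.
Set Implicit Arguments. Unset Strict Implicit. Unset Printing Implicit Defensive.
Import Order.TTheory GRing.Theory Num.Theory.
Local Open Scope ring_scope.

(* A formal power series in two variables x, y over R, given by its
   coefficient family: s m n is the coefficient of x^m y^n. *)
Definition fps2 (R : Type) := nat -> nat -> R.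

Definition fps2_dx (R : realType) (s : fps2 R) : fps2 R :=
  fun m n => (m.+1)%:R * s m.+1 n.
Definition fps2_dy (R : realType) (s : fps2 R) : fps2 R :=
  fun m n => (n.+1)%:R * s m n.+1.

Definition fps2_mul (R : realType) (s t : fps2 R) : fps2 R :=
  fun m n => \sum_(i < m.+1) \sum_(j < n.+1) s i j * t (m - i)%N (n - j)%N.

Definition fps2_add (R : realType) (s t : fps2 R) : fps2 R :=
  fun m n => s m n + t m n.

Definition Q_lin_indep (R : realType) (a b : R) : Prop :=
  forall p q : rat, ratr p * a + ratr q * b = 0 -> p = 0 /\ q = 0.

Definition jet2 (R : realType) (s : fps2 R) (c20 c02 : R) : Prop :=
  s 0%N 0%N = 0 /\ s 1%N 0%N = 0 /\ s 0%N 1%N = 0 /\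
  s 2%N 0%N = c20 /\ s 1%N 1%N = 0 /\ s 0%N 2%N = c02.

(* Main.v *)
Require Import Defs.
From mathcomp Require Import all_boot all_order all_algebra zify ring lra.
From mathcomp Require Import reals.
From Stdlib Require Import FunctionalExtensionality.
Import Order.TTheory GRing.Theory Num.Theory.
Local Open Scope ring_scope.

Section S.
Variable R : realType.

Lemma sum2_ind m n i0 j0 (C : R) :
  \sum_(i < m.+1) \sum_(j < n.+1) (if (i == i0 :> nat) && (j == j0 :> nat) then C else 0)
  = if (i0 <= m)%N && (j0 <= n)%N then C else 0.
Proof.
transitivity (\sum_(i < m.+1) (if i == i0 :> nat then (if (j0 < n.+1)%N then C else 0) else 0)).
  apply: eq_bigr => i _; case: (i == i0 :> nat) => /=.
    by rewrite -big_mkcond /= (big_ord1_eq _ (fun _ => C)).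
  by rewrite big1.
rewrite -big_mkcond /= (big_ord1_eq _ (fun _ => if (j0 < n.+1)%N then C else 0)).
rewrite ltnS; case: (i0 <= m)%N => //=.
Qed.

Ltac crush := rewrite /=; repeat (case: ifP => ? /=); try (exfalso; lia).

Lemma term (u u' : fps2 R) (al be : R) m n i j :
  u 0%N 0%N = 0 -> u' 0%N 0%N = 0 -> u 1%N 0%N = al -> u' 1%N 0%N = al -> u 0%N 1%N = be -> u' 0%N 1%N = be ->
  (forall i j, ((i + j).+1 < m + n)%N -> u i j = u' i j) -> (3 <= m + n)%N ->
  (i <= m)%N -> (j <= n)%N ->
  u i j * u (m - i)%N (n - j)%N - u' i j * u' (m - i)%N (n - j)%N =
  (if (i == m.-1) && (j == n) then (if (0 < m)%N then al * (u m.-1 n - u' m.-1 n) else 0) else 0)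
  + (if (i == m) && (j == n.-1) then (if (0 < n)%N then be * (u m n.-1 - u' m n.-1) else 0) else 0)
  + (if (i == 1%N) && (j == 0%N) then (if (0 < m)%N then al * (u m.-1 n - u' m.-1 n) else 0) else 0)
  + (if (i == 0%N) && (j == 1%N) then (if (0 < n)%N then be * (u m n.-1 - u' m n.-1) else 0) else 0).
Proof.
move=> h0 h0' h1 h1' h2 h2' hag h3 him hjn.
have [H1|H1] := boolP ((i+j).+1 < m+n)%N; have [H2|H2] := boolP ((m - i + (n - j)).+1 < m+n)%N.
- rewrite (hag i j H1) (hag (m - i)%N (n - j)%N H2) subrr.
  crush; try ring.
- have: (i = 0 /\ j = 0 \/ i = 1 /\ j = 0 \/ i = 0 /\ j = 1)%N by lia.
  case=> [[? ?]|[[? ?]|[? ?]]]; subst i j.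
  + rewrite h0 h0'; crush; try ring.
  + rewrite h1 h1' subn0; have -> : (m - 1 = m.-1)%N by lia.
    crush; try ring.
  + rewrite h2 h2' subn0; have -> : (n - 1 = n.-1)%N by lia.
    crush; try ring.
- have: (i = m /\ j = n \/ (0 < m /\ i = m.-1 /\ j = n) \/ (0 < n /\ i = m /\ j = n.-1))%N by lia.
  case=> [[? ?]|[[? [? ?]]|[? [? ?]]]]; subst i j.
  + rewrite !subnn h0 h0'; crush; try ring.
  + have -> : (m - m.-1 = 1)%N by lia. rewrite subnn h1 h1'; crush; try ring.
  + have -> : (n - n.-1 = 1)%N by lia. rewrite subnn h2 h2'; crush; try ring.
- exfalso; lia.
Qed.

Lemma gen (u u' : fps2 R) (al be : R) m n :
  u 0%N 0%N = 0 -> u' 0%N 0%N = 0 -> u 1%N 0%N = al -> u' 1%N 0%N = al -> u 0%N 1%N = be -> u' 0%N 1%N = be ->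
  (forall i j, ((i + j).+1 < m + n)%N -> u i j = u' i j) -> (3 <= m + n)%N ->
  fps2_mul u u m n - fps2_mul u' u' m n =
  2 * ((if (0 < m)%N then al * (u m.-1 n - u' m.-1 n) else 0)
     + (if (0 < n)%N then be * (u m n.-1 - u' m n.-1) else 0)).
Proof.
move=> h0 h0' h1 h1' h2 h2' hag h3.
set C1 := (if (0 < m)%N then _ else _).
set C2 := (if (0 < n)%N then _ else _).
rewrite /fps2_mul -sumrB.
under eq_bigr => i _.
  rewrite -sumrB.
  under eq_bigr => j _ do rewrite (term u u' al be m n i j h0 h0' h1 h1' h2 h2' hag h3 (ltn_ord i) (ltn_ord j)) -/C1 -/C2.
  over.
rewrite /=.
under eq_bigr => i _ do rewrite !big_split /=.
rewrite !big_split /= !sum2_ind.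
rewrite /C1 /C2; crush; ring.
Qed.
End S.

Definition E {R : realType} (z : fps2 R) := fps2_add (fps2_mul (fps2_dx z) (fps2_dx z)) (fps2_mul (fps2_dy z) (fps2_dy z)).

Lemma low (R : realType) (a b : R) (w h : fps2 R) m n :
  jet2 w (a / 2) (- (b / 2)) -> jet2 h (a ^+ 2) (b ^+ 2) -> (m + n <= 2)%N -> E w m n = h m n.
Proof.
move=> [w00 [w10 [w01 [w20 [w11 w02]]]]] [h00 [h10 [h01 [h20 [h11 h02]]]]] hmn.
have: (m = 0 /\ n = 0 \/ m = 1 /\ n = 0 \/ m = 0 /\ n = 1 \/ m = 2 /\ n = 0 \/ m = 1 /\ n = 1 \/ m = 0 /\ n = 2)%N by lia.
case=> [[? ?]|[[? ?]|[[? ?]|[[? ?]|[[? ?]|[? ?]]]]]]; subst m n;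
rewrite /E /fps2_add /fps2_mul /fps2_dx /fps2_dy !big_ord_recr !big_ord0 /=.
all: rewrite ?subnn ?subn0 ?subSS ?subn0 ?subnn ?w00 ?w10 ?w01 ?w20 ?w11 ?w02 ?h00 ?h10 ?h01 ?h20 ?h11 ?h02; field. all: done.
Qed.

Lemma diff (R : realType) (a b : R) (w w' : fps2 R) m n :
  jet2 w (a / 2) (- (b / 2)) -> jet2 w' (a / 2) (- (b / 2)) ->
  (forall i j, (i + j < m + n)%N -> w i j = w' i j) -> (3 <= m + n)%N ->
  E w m n - E w' m n = 2 * (a * m%:R - b * n%:R) * (w m n - w' m n).
Proof.
move=> [w00 [w10 [w01 [w20 [w11 w02]]]]] [w00' [w10' [w01' [w20' [w11' w02']]]]] hag h3.
have hx := gen R (fps2_dx w) (fps2_dx w') a 0 m n.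
have hy := gen R (fps2_dy w) (fps2_dy w') 0 (- b) m n.
rewrite /fps2_dx /fps2_dy in hx hy.
rewrite ?w00 ?w10 ?w01 ?w20 ?w11 ?w02 ?w00' ?w10' ?w01' ?w20' ?w11' ?w02' in hx hy.
have e : forall x : R, 2%:R * (x / 2) = x by move=> x; field.
have hx' := hx (mulr0 _) (mulr0 _) (e a) (e a) (mulr0 _) (mulr0 _).
have hy' := hy (mulr0 _) (mulr0 _) (mulr0 _) (mulr0 _).
rewrite mulrN (e b) in hy'.
have agx : forall i j, ((i+j).+1 < m+n)%N -> i.+1%:R * w i.+1 j = i.+1%:R * w' i.+1 j.
  by move=> i j H; rewrite hag //; lia.
have agy : forall i j, ((i+j).+1 < m+n)%N -> j.+1%:R * w i j.+1 = j.+1%:R * w' i j.+1.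
  by move=> i j H; rewrite hag //; lia.
have Hx := hx' agx h3.
have Hy := hy' erefl erefl agy h3.
rewrite /E /fps2_add /fps2_dx /fps2_dy.
have -> : forall A B A' B' : R, (A+B) - (A'+B') = (A - A') + (B - B') by move=> *; ring.
rewrite Hx Hy.
case: (posnP m) => [->|mpos]; case: (posnP n) => [->|npos] /=; rewrite ?(prednK mpos) ?(prednK npos); ring.
Qed.

Definition z0 {R : realType} (a b : R) : fps2 R := fun m n =>
  if (m == 2%N) && (n == 0%N) then a / 2
  else if (m == 0%N) && (n == 2%N) then - (b / 2) else 0.

Fixpoint zk {R : realType} (a b : R) (h : fps2 R) (k : nat) : fps2 R :=
  match k with
  | 0%N => z0 a b
  | k'.+1 => let w := zk a b h k' in fun m n =>
      if (m + n == k'.+1)%N && (3 <= m + n)%N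
      then w m n + (h m n - E w m n) / (2 * (a * m%:R - b * n%:R))
      else w m n
  end.

Definition zf {R : realType} (a b : R) (h : fps2 R) : fps2 R := fun m n => zk a b h (m + n) m n.

Lemma zk_low (R : realType) (a b : R) h k m n : (m + n <= 2)%N -> zk a b h k m n = z0 a b m n.
Proof.
move=> H; elim: k => [//|k IH] /=.
have -> : ((m + n == k.+1)%N && (3 <= m + n)%N) = false by lia.
exact: IH.
Qed.

Lemma jet_z0 (R : realType) (a b : R) : jet2 (z0 a b) (a / 2) (- (b / 2)).
Proof. by rewrite /jet2 /z0 /=. Qed.

Lemma jet_zk (R : realType) (a b : R) h k : jet2 (zk a b h k) (a / 2) (- (b / 2)).
Proof. by rewrite /jet2 !zk_low //; exact: jet_z0. Qed.

Lemma jet_zf (R : realType) (a b : R) h : jet2 (zf a b h) (a / 2) (- (b / 2)).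
Proof. by rewrite /jet2 /zf !zk_low //; exact: jet_z0. Qed.

Lemma zk_stable (R : realType) (a b : R) h k k' m n :
  (m + n <= k)%N -> (k <= k')%N -> zk a b h k' m n = zk a b h k m n.
Proof.
move=> H1 H2; rewrite -(subnKC H2); elim: (k' - k)%N => [|d IH]; first by rewrite addn0.
rewrite addnS /=.
have -> : ((m + n == (k + d).+1)%N && (3 <= m + n)%N) = false by lia.
exact: IH.
Qed.

Lemma zf_agree (R : realType) (a b : R) h k m n :
  (m + n <= k)%N -> zf a b h m n = zk a b h k m n.
Proof. by move=> H; rewrite /zf (zk_stable R a b h (m+n) k m n (leqnn _) H). Qed.

Lemma cne0 (R : realType) (a b : R) m n : Q_lin_indep a b -> (0 < m + n)%N ->
  2 * (a * m%:R - b * n%:R) != 0.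
Proof.
move=> hq hmn; rewrite mulf_eq0 negb_or pnatr_eq0 /=; apply/eqP => H.
have H' : ratr (m%:R : rat) * a + ratr (- (n%:R : rat)) * b = 0.
  by rewrite rmorphN !ratr_nat -H; ring.
move: (hq _ _ H') => [/eqP]; rewrite pnatr_eq0 => /eqP m0 /eqP; rewrite oppr_eq0 pnatr_eq0 => /eqP n0.
lia.
Qed.

Lemma exist_eq (R : realType) (a b : R) h : Q_lin_indep a b -> jet2 h (a ^+ 2) (b ^+ 2) ->
  forall m n, E (zf a b h) m n = h m n.
Proof.
move=> hq hh m n.
case: (leqP (m + n) 2) => hmn; first exact: low (jet_zf R a b h) hh hmn.
have [k hk] : exists k, (m + n = k.+1)%N by exists (m + n).-1; lia.
have d1 := diff R a b (zf a b h) (zk a b h k.+1) m n (jet_zf R a b h) (jet_zk R a b h _)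
  (fun i j H => zf_agree R a b h k.+1 i j (ltnW (leq_trans H (eq_leq hk)))) hmn.
rewrite (zf_agree R a b h k.+1 m n (eq_leq hk)) subrr mulr0 in d1.
have d2 := diff R a b (zk a b h k.+1) (zk a b h k) m n (jet_zk R a b h _) (jet_zk R a b h _)
  (fun i j H => zk_stable R a b h k k.+1 i j (leq_trans H (eq_leq hk)) (leqnSn k)) hmn.
have v : zk a b h k.+1 m n = zk a b h k m n + (h m n - E (zk a b h k) m n) / (2 * (a * m%:R - b * n%:R)).
  by rewrite /= hk eqxx -hk hmn.
have c0 := cne0 R a b m n hq (ltnW (ltnW hmn)).
move/eqP: d1; rewrite subr_eq0 => /eqP ->.
move: d2; rewrite v => d2.
have -> : E (zk a b h k.+1) m n = E (zk a b h k) m n + 2 * (a * m%:R - b * n%:R) *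
   (zk a b h k m n + (h m n - E (zk a b h k) m n) / (2 * (a * m%:R - b * n%:R)) - zk a b h k m n).
  by rewrite -d2; ring.
have -> : forall x y : R, x + y - x = y by move=> x y; ring.
by rewrite mulrCA mulfV // mulr1 addrC subrK.
Qed.

Lemma jet_val (R : realType) (a b : R) (w : fps2 R) m n :
  jet2 w (a / 2) (- (b / 2)) -> (m + n <= 2)%N -> w m n = z0 a b m n.
Proof.
move=> [w00 [w10 [w01 [w20 [w11 w02]]]]] hmn.
have: (m = 0 /\ n = 0 \/ m = 1 /\ n = 0 \/ m = 0 /\ n = 1 \/ m = 2 /\ n = 0 \/ m = 1 /\ n = 1 \/ m = 0 /\ n = 2)%N by lia.
by case=> [[? ?]|[[? ?]|[[? ?]|[[? ?]|[[? ?]|[? ?]]]]]]; subst m n; rewrite /z0 /=.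
Qed.

Theorem theorem4p2 (R : realType) (a b : R) (h : fps2 R) :
  0 < a -> 0 < b -> Q_lin_indep a b ->
  jet2 h (a ^+ 2) (b ^+ 2) ->
  exists! z : fps2 R,
    jet2 z (a / 2) (- (b / 2)) /\
    fps2_add (fps2_mul (fps2_dx z) (fps2_dx z))
             (fps2_mul (fps2_dy z) (fps2_dy z)) = h.
Proof.
move=> ha hb hq hh.
exists (zf a b h); split.
  split; first exact: jet_zf.
  apply: functional_extensionality => m; apply: functional_extensionality => n.
  exact: exist_eq.
move=> z [jz Ez].
have key : forall N m n, (m + n < N)%N -> zf a b h m n = z m n.
  elim=> [m n|N IH m n H]; first by rewrite ltn0.
  case: (ltnP (m + n) N) => H'; first exact: IH.
  case: (leqP (m + n) 2) => hmn.
    by rewrite (jet_val R a b z m n jz hmn) (jet_val R a b _ m n (jet_zf R a b h) hmn).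
  have d := diff R a b (zf a b h) z m n (jet_zf R a b h) jz
    (fun i j Hij => IH i j (leq_trans Hij H)) hmn.
  have e1 : E z m n = h m n by rewrite /E Ez.
  rewrite exist_eq // e1 subrr in d.
  have c0 := cne0 R a b m n hq (ltnW (ltnW hmn)).
  move/esym/eqP: d; rewrite mulf_eq0 (negbTE c0) /= subr_eq0 => /eqP //.
apply: functional_extensionality => m; apply: functional_extensionality => n.
exact: (key (m + n).+1).
Qed.
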